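(* Let $d\ge4$ and $\alpha\in(0,\frac12)$ with $(d+1)\alpha\in\mathbb{Z}$. Let $e$ span the kernel of $Q_\alpha$ on $\mathbb{C}^{\mathcal A_d}$, let $SU^*(Q_\alpha)$ be the group of linear automorphisms of $\mathbb{C}^{\mathcal A_d}$ of determinant $1$ that preserve $Q_\alpha$ and fix $e$, and let $D$ be the subgroup of $SU^*(Q_\alpha)$ consisting of the elements that map the hyperplane $H_{1-d}=\mathrm{span}\{e_q:q\ne 1-d\}$ into itself. Then any subgroup of $SU^*(Q_\alpha)$ containing $D$ is equal to $D$ or to $SU^*(Q_\alpha)$.
   Context: $\mathcal A_d=\{1-d,3-d,\dots,d-1\}$, $(e_q)_{q\in\mathcal A_d}$ the canonical basis of $\mathbb{C}^{\mathcal A_d}$, $\zeta=e^{-2\pi i\alpha}$. $Q_\alpha$ is the hermitian form on $\mathbb{C}^{\mathcal A_d}$ (linear in the first argument, conjugate-linear in the second) with $Q_\alpha(e_p,e_p)=1$ and $Q_\alpha(e_p,e_{p'})=(1+\zeta)^{-1}=\frac12(1+i\tan\pi\alpha)$ for $p>p'$. Under the hypothesis $(d+1)\alpha\in\mathbb{Z}$, the kernel of $Q_\alpha$ is one-dimensional and is not contained in $H_{1-d}$, so in the basis $(e,e_{3-d},\dots,e_{d-1})$ elements of $SU^*(Q_\alpha)$ have block form $\begin{pmatrix}1&v\\0&g\end{pmatrix}$, and $D$ consists of those with $v=0$. *)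

(* Defs.v *)
From HB Require Import structures.
From mathcomp Require Import all_boot all_order all_algebra.
From mathcomp Require Import complex.
From mathcomp Require Import classical_sets reals trigo.
Set Implicit Arguments. Unset Strict Implicit. Unset Printing Implicit Defensive.
Import Order.TTheory GRing.Theory Num.Theory.
Local Open Scope ring_scope.
Local Open Scope complex_scope.

Section QForm.
Variables (R : realType) (d : nat) (alpha : R).

Definition zeta : R[i] :=
  (cos (2 * pi * alpha)) -i* (sin (2 * pi * alpha)).

(* Index i : 'I_d stands for q = 2 i + 1 - d in A_d; this is increasing in i,
   so q > q' iff i > i'.  Gram matrix of Q_alpha in the basis (e_q). *)
Definition Qmat : 'M[R[i]]_d :=
  \matrix_(i, j) (if i == j then 1
                  else if (j < i)%N then (1 + zeta)^-1
                  else ((1 + zeta)^-1)^*).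

Definition Qform (x y : 'cV[R[i]]_d) : R[i] :=
  \sum_(i < d) \sum_(j < d) x i 0 * Qmat i j * (y j 0)^*.

Definition SUstar (e : 'cV[R[i]]_d) : set 'M[R[i]]_d :=
  [set g | [/\ \det g = 1,
               (forall x y, Qform (g *m x) (g *m y) = Qform x y)
             & g *m e = e]].

(* H_{1-d} = span{e_q : q <> 1-d} = vectors with vanishing first coordinate
   (index 0 corresponds to q = 1-d). *)
Definition Hyp (x : 'cV[R[i]]_d) : Prop := forall i : 'I_d, val i = 0%N -> x i 0 = 0.

Definition Dgrp (e : 'cV[R[i]]_d) : set 'M[R[i]]_d :=
  [set g | SUstar e g /\ (forall x, Hyp x -> Hyp (g *m x))].

End QForm.

(* Main.v *)
Require Import Defs.
From HB Require Import structures.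
From mathcomp Require Import all_boot all_order all_algebra.
From mathcomp Require Import complex.
From mathcomp Require Import classical_sets reals trigo.
From mathcomp Require Import ring lra zify.
From Stdlib Require Import Classical.
Set Implicit Arguments. Unset Strict Implicit. Unset Printing Implicit Defensive.
Import Order.TTheory GRing.Theory Num.Theory.
Local Open Scope ring_scope.

Section Gen.
Variable R : realType.
Local Notation C := R[i].
Variable d : nat.
Variable M : 'M[C]_d.

Definition cmx (x : 'cV[C]_d) : 'cV[C]_d := map_mx Num.conj x.
Definition QF (x y : 'cV[C]_d) : C :=
  \sum_(i < d) \sum_(j < d) x i 0 * M i j * (y j 0)^*.
Definition rho (y : 'cV[C]_d) : 'rV[C]_d := (M *m cmx y)^T.
Definition app (f : 'rV[C]_d) (x : 'cV[C]_d) : C := (f *m x) 0 0.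

Lemma QFE x y : QF x y = app (rho y) x.
Proof.
rewrite /QF /app /rho !mxE; apply: eq_bigr => i _; rewrite !mxE mulr_suml.
by apply: eq_bigr => j _; rewrite !mxE; ring.
Qed.

Lemma appD f x y : app f (x + y) = app f x + app f y.
Proof. by rewrite /app mulmxDr mxE. Qed.
Lemma appZ f a x : app f (a *: x) = a * app f x.
Proof. by rewrite /app -scalemxAr mxE. Qed.
Lemma appDl f g x : app (f + g) x = app f x + app g x.
Proof. by rewrite /app mulmxDl mxE. Qed.
Lemma appZl a f x : app (a *: f) x = a * app f x.
Proof. by rewrite /app -scalemxAl mxE. Qed.
Lemma appN f x : app (- f) x = - app f x.
Proof. by rewrite /app mulNmx mxE. Qed.
Lemma appNr f x : app f (- x) = - app f x.
Proof. by rewrite /app mulmxN mxE. Qed.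
Lemma app0 f : app f 0 = 0.
Proof. by rewrite /app mulmx0 mxE. Qed.
Lemma app0l x : app 0 x = 0.
Proof. by rewrite /app mul0mx mxE. Qed.
Lemma appM f g x : app (f *m g) x = app f (g *m x).
Proof. by rewrite /app mulmxA. Qed.

Lemma cmxD x y : cmx (x + y) = cmx x + cmx y.
Proof. by apply/matrixP => i j; rewrite !mxE rmorphD. Qed.
Lemma cmxZ a x : cmx (a *: x) = a^* *: cmx x.
Proof. by apply/matrixP => i j; rewrite !mxE rmorphM. Qed.
Lemma rhoD x y : rho (x + y) = rho x + rho y.
Proof. by rewrite /rho cmxD mulmxDr linearD. Qed.
Lemma rhoZ a x : rho (a *: x) = a^* *: rho x.
Proof. by rewrite /rho cmxZ -scalemxAr linearZ. Qed.
Lemma rhoN x : rho (- x) = - rho x.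
Proof. by rewrite -scaleN1r rhoZ rmorphN1 scaleN1r. Qed.

Lemma QFDl x x' y : QF (x + x') y = QF x y + QF x' y.
Proof. by rewrite !QFE appD. Qed.
Lemma QFZl a x y : QF (a *: x) y = a * QF x y.
Proof. by rewrite !QFE appZ. Qed.
Lemma QFDr x y y' : QF x (y + y') = QF x y + QF x y'.
Proof. by rewrite !QFE rhoD appDl. Qed.
Lemma QFZr a x y : QF x (a *: y) = a^* * QF x y.
Proof. by rewrite !QFE rhoZ appZl. Qed.

Lemma row_eq0 (f : 'rV[C]_d) : (forall x, app f x = 0) -> f = 0.
Proof.
move=> H; apply/rowP => j; have := H (delta_mx j 0).
by rewrite /app -colE !mxE.
Qed.

Lemma conj_delta j : cmx (delta_mx j 0) = delta_mx j 0.
Proof. by apply/matrixP => a b; rewrite !mxE; case: (_ && _); rewrite ?conjC1 ?conjC0. Qed.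

Lemma conjc_b (b : bool) : ((b%:R : C))^* = b%:R.
Proof. by rewrite conjC_nat. Qed.

Lemma ker_rowM x : (forall y, QF x y = 0) -> x^T *m M = 0.
Proof.
move=> H; apply/rowP => j; rewrite [RHS]mxE -(H (delta_mx j 0)) mxE /QF.
apply: eq_bigr => i _; rewrite (bigD1 j) //= big1 ?addr0.
  by rewrite !mxE conjc_b !eqxx mulr1.
by move=> k hk; rewrite !mxE conjc_b (negbTE hk) /= mulr0.
Qed.

Hypothesis Mherm : forall i j, M j i = (M i j)^*.

Lemma QF_herm x y : QF y x = (QF x y)^*.
Proof.
rewrite /QF rmorph_sum /= exchange_big /=; apply: eq_bigr => i _.
rewrite rmorph_sum; apply: eq_bigr => j _.
by rewrite !rmorphM /= conjCK -Mherm; ring.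
Qed.

Lemma QF_real x : (QF x x)^* = QF x x.
Proof. by rewrite -QF_herm. Qed.

End Gen.
Lemma QF_Qform (R : realType) d (alpha : R) x y : Qform alpha x y = QF (Qmat d alpha) x y.
Proof. by []. Qed.

Lemma quad (F : numFieldType) (a b c a' b' : F) : c != 0 -> (a' != 0) || (b' != 0) ->
  exists n : nat, (a + b * n%:R + c * n%:R ^+ 2 != 0) && (a' + b' * n%:R != 0).
Proof.
move=> c0 ab.
pose f (n : nat) := a + b * n%:R + c * n%:R ^+ 2.
pose g (n : nat) := a' + b' * n%:R.
have dn : forall n1 n2 : nat, n1 != n2 -> (n1%:R - n2%:R : F) != 0.
  by move=> n1 n2 h; rewrite subr_eq0 eqr_nat.
have L1 : forall n1 n2 : nat, n1 != n2 -> g n1 = 0 -> g n2 = 0 -> False.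
  move=> n1 n2 h h1 h2.
  have E : b' * (n1%:R - n2%:R) = g n1 - g n2 by rewrite /g; ring.
  have : b' * (n1%:R - n2%:R) = 0 by rewrite E h1 h2 subrr.
  move/eqP; rewrite mulf_eq0 (negbTE (dn _ _ h)) orbF => /eqP b0.
  move: h1; rewrite /g b0 mul0r addr0 => a0.
  by move: ab; rewrite a0 b0 eqxx.
have L2 : forall n1 n2 n3 : nat, n1 != n2 -> n1 != n3 -> n2 != n3 ->
    f n1 = 0 -> f n2 = 0 -> f n3 = 0 -> False.
  move=> n1 n2 n3 h12 h13 h23 h1 h2 h3.
  have : c * ((n1%:R - n2%:R) * (n1%:R - n3%:R) * (n2%:R - n3%:R)) = 0.
    have -> : c * ((n1%:R - n2%:R) * (n1%:R - n3%:R) * (n2%:R - n3%:R)) =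
      f n1 * (n2%:R - n3%:R) - f n2 * (n1%:R - n3%:R) + f n3 * (n1%:R - n2%:R).
      by rewrite /f; ring.
    by rewrite h1 h2 h3; ring.
  move/eqP; rewrite !mulf_eq0 (negbTE c0) (negbTE (dn _ _ h12)) (negbTE (dn _ _ h13)).
  by rewrite (negbTE (dn _ _ h23)).
case: (boolP [exists n : 'I_4, (f n != 0) && (g n != 0)]).
  by case/existsP => n hn; exists n.
move/existsPn => H.
have H' : forall n : nat, (n < 4)%N -> f n = 0 \/ g n = 0.
  move=> n hn; have := H (Ordinal hn); rewrite negb_and !negbK /=.
  by case/orP => /eqP h; [left | right].
case: (H' 0%N isT) (H' 1%N isT) (H' 2%N isT) (H' 3%N isT) => h0 [] h1 [] h2 [] h3;
  solve [ exfalso; match goal with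
    | p : g ?n1 = 0, q : g ?n2 = 0 |- _ => exact: (L1 n1 n2 isT p q)
    | p : f ?n1 = 0, q : f ?n2 = 0, r : f ?n3 = 0 |- _ => exact: (L2 n1 n2 n3 isT isT isT p q r)
    end ].
Qed.

Section CG.
Variable R : realType.
Local Open Scope complex_scope.
Lemma cadd (a b c e : R) : (a +i* b) + (c +i* e) = (a + c) +i* (b + e). Proof. by []. Qed.
Lemma copp (a b : R) : - (a +i* b) = (- a) +i* (- b). Proof. by []. Qed.
Lemma cmul (a b c e : R) : (a +i* b) * (c +i* e) = (a * c - b * e) +i* (a * e + b * c). Proof. by []. Qed.
Lemma cconj (a b : R) : Num.conj (a +i* b) = a +i* (- b). Proof. by []. Qed.
Lemma cone : (1 : R[i]) = 1 +i* 0. Proof. by []. Qed.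
Lemma cnat n : (n%:R : R[i]) = n%:R +i* 0. Proof. by rewrite -(rmorph_nat (@real_complex R)). Qed.
Lemma ceq (a b c e : R) : (a +i* b = c +i* e) <-> (a = c /\ b = e). Proof. by split; [case | case=> -> ->]. Qed.

Lemma unit_circle (x y : R) : x ^+ 2 + y ^+ 2 = 1 -> (x +i* y) * Num.conj (x +i* y) = 1.
Proof. by move=> h; rewrite cconj cmul cone; apply/ceq; split; [rewrite -h | ]; ring. Qed.

Lemma gen (S : R[i] -> Prop) : S 0 -> (forall a b, S a -> S b -> S (a + b)) ->
  (forall a, S a -> S (- a)) -> (forall l, l * Num.conj l = 1 -> S (l - 1)) -> forall z, S z.
Proof.
move=> S0 SD SN SL.
have Sn : forall n a, S a -> S (a *+ n).
  by elim => [|n IH] a Sa; [rewrite mulr0n | rewrite mulrS; apply: SD => //; apply: IH].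
have S2 : S 2.
  have := SN _ (SL (-1) _); rewrite conjCN1 mulrNN mulr1 => /(_ erefl).
  by rewrite opprB opprK (_ : 1 + 1 = 2) // -addrA addrN addr0.
have hsq : forall a : R, -1 <= a <= 1 -> 0 <= 1 - a ^+ 2 / 4.
  move=> a /andP[h1 h2]; nra.
have Sre : forall a : R, -1 <= a <= 1 -> S (a +i* 0).
  move=> a ha; pose s := Num.sqrt (1 - a ^+ 2 / 4).
  have hs : s ^+ 2 = 1 - a ^+ 2 / 4 by rewrite sqr_sqrtr // hsq.
  have hl : (a / 2) ^+ 2 + s ^+ 2 = 1 by rewrite hs; field.
  have hl' : (a / 2) ^+ 2 + (- s) ^+ 2 = 1 by rewrite sqrrN.
  have := SD _ _ (SD _ _ (SL _ (unit_circle hl)) (SL _ (unit_circle hl'))) S2.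
  rewrite cone cnat !copp !cadd; by congr S; apply/ceq; split; field; rewrite ?pnatr_eq0.
have Sim : forall b : R, -1 <= b <= 1 -> S (0 +i* b).
  move=> b hb; pose s := Num.sqrt (1 - b ^+ 2 / 4).
  have hs : s ^+ 2 = 1 - b ^+ 2 / 4 by rewrite sqr_sqrtr // hsq.
  have hl : s ^+ 2 + (b / 2) ^+ 2 = 1 by rewrite hs; field.
  have hl' : s ^+ 2 + (- (b / 2)) ^+ 2 = 1 by rewrite sqrrN.
  have := SD _ _ (SL _ (unit_circle hl)) (SN _ (SL _ (unit_circle hl'))).
  rewrite cone !copp !cadd; by congr S; apply/ceq; split; field; rewrite ?pnatr_eq0.
move=> [x y].
set N := Num.Def.archi_bound (`|x| + `|y|).
have hN : `|x| + `|y| < N%:R by apply: archi_boundP; rewrite addr_ge0.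
have Np : 0 < (N%:R : R) by apply: le_lt_trans hN; rewrite addr_ge0.
have hx : -1 <= x / N%:R <= 1.
  rewrite ler_pdivrMr // ler_pdivlMr // mul1r mulN1r.
  move: hN (normr_ge0 y); case: (lerP 0 x) => h0;
    rewrite ?(ger0_norm h0) ?(ltr0_norm h0) => *; apply/andP; split; lra.
have hy : -1 <= y / N%:R <= 1.
  rewrite ler_pdivrMr // ler_pdivlMr // mul1r mulN1r.
  move: hN (normr_ge0 x); case: (lerP 0 y) => h0;
    rewrite ?(ger0_norm h0) ?(ltr0_norm h0) => *; apply/andP; split; lra.
have := Sn N _ (SD _ _ (Sre _ hx) (Sim _ hy)).
have E : forall w : R[i], w *+ N = w * N%:R by move=> w; rewrite mulr_natr.
rewrite E cnat cadd cmul; congr S; apply/ceq; split; field; exact: lt0r_neq0.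
Qed.
End CG.

Lemma det_rank1 (F : fieldType) n (u : 'cV[F]_n) (f : 'rV[F]_n) :
  \det (1%:M + u *m f) = 1 + (f *m u) 0 0.
Proof.
pose B := block_mx (1%:M : 'M_n) u (- f) (1%:M : 'M_1).
have E1 : B = block_mx 1%:M 0 (-f) 1%:M *m block_mx 1%:M u 0 (1%:M + f *m u).
  rewrite mulmx_block /B; congr block_mx.
  - by rewrite mulmx1 mul0mx addr0.
  - by rewrite mul1mx mul0mx addr0.
  - by rewrite mulmx1 mulmx0 addr0.
  - by rewrite mul1mx mulNmx addrC addrK.
have E2 : B = block_mx (1%:M + u *m f) u 0 1%:M *m block_mx 1%:M 0 (-f) 1%:M.
  rewrite mulmx_block /B; congr block_mx.
  - by rewrite mulmx1 mulmxN -addrA subrr addr0.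
  - by rewrite mulmx0 mulmx1 add0r.
  - by rewrite ?mulmx1 ?mul1mx ?mul0mx ?mulmx0 ?add0r ?addr0.
  - by rewrite ?mulmx1 ?mul1mx ?mul0mx ?mulmx0 ?add0r ?addr0.
have := congr1 determinant E1; rewrite {1}E2 !det_mulmx !det_lblock !det_ublock.
by rewrite !det1 !mul1r !mulr1 det_mx11 => ->; rewrite mxE [in LHS]mxE eqxx mulr1n.
Qed.

Section E.
Variable R : realType.
Local Notation C := R[i].
Variable d : nat.
Variable M : 'M[C]_d.
Hypothesis Mherm : forall i j, M j i = (M i j)^*.
Variable e : 'cV[C]_d.
Hypothesis he0 : e != 0.
Hypothesis hker : forall x : 'cV[C]_d,
      (forall y, QF M x y = 0) <-> exists c : C, x = c *: e.
Variable i0 : 'I_d.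
Hypothesis he00 : e i0 0 != 0.

Local Notation Q := (QF M).
Local Notation rh := (rho M).

Lemma QeL y : Q e y = 0.
Proof. by move: y; apply/hker; exists 1; rewrite scale1r. Qed.
Lemma QeR y : Q y e = 0.
Proof. by rewrite QF_herm // QeL conjC0. Qed.
Lemma rho_e : rh e = 0.
Proof. by apply: row_eq0 => x; rewrite -QFE QeR. Qed.

Definition SUs (g : 'M[C]_d) :=
  [/\ \det g = 1, (forall x y, Q (g *m x) (g *m y) = Q x y) & g *m e = e].
Definition Hy (x : 'cV[C]_d) := x i0 0 = 0.
Definition Dg (g : 'M[C]_d) := SUs g /\ (forall x, Hy x -> Hy (g *m x)).
Definition T (f : 'rV[C]_d) : 'M[C]_d := 1%:M + e *m f.

Lemma mx_app (f : 'rV[C]_d) x : f *m x = (app f x)%:M.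
Proof. exact: mx11_scalar. Qed.

Lemma Tx f x : T f *m x = x + app f x *: e.
Proof. by rewrite /T mulmxDl mul1mx -mulmxA mx_app mul_mx_scalar. Qed.

Lemma Q_shift x y a b : Q (x + a *: e) (y + b *: e) = Q x y.
Proof. by rewrite QFDl QFDr QFDr QFZl QFZl QFZr QFZr !QeL !QeR !mulr0 !addr0 ?add0r ?addr0. Qed.

Lemma T_SU f : f *m e = 0 -> SUs (T f).
Proof.
move=> fe; split.
- by rewrite det_rank1 fe mxE addr0.
- by move=> x y; rewrite !Tx Q_shift.
- by rewrite /T mulmxDl mul1mx -mulmxA fe mulmx0 addr0.
Qed.

Lemma T_mul f g : f *m e = 0 -> T f *m T g = T (f + g).
Proof.
move=> fe; rewrite /T mulmxDl mul1mx !mulmxDr mulmx1.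
have -> : e *m f *m (e *m g) = 0 by rewrite mulmxA -(mulmxA e f e) fe mulmx0 mul0mx.
by rewrite addr0 addrAC addrA.
Qed.

Lemma T0 : T 0 = 1%:M.
Proof. by rewrite /T mulmx0 addr0. Qed.

Lemma SU_unit g : SUs g -> g \in unitmx.
Proof. by case=> dg _ _; rewrite unitmxE dg unitr1. Qed.

Lemma T_inv f : f *m e = 0 -> invmx (T f) = T (- f).
Proof.
move=> fe; have U := SU_unit (T_SU fe).
by rewrite -[invmx _]mulmx1 -T0 -(subrr f) -T_mul // mulmxA mulVmx // mul1mx.
Qed.

Lemma conj_T k f : k \in unitmx -> k *m e = e -> invmx k *m T f *m k = T (f *m k).
Proof.
move=> ku ke; have ke' : invmx k *m e = e by rewrite -{1}ke mulKmx.
by rewrite /T mulmxDr mulmx1 mulmxDl mulVmx // !mulmxA ke' -mulmxA.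
Qed.

Lemma SU_mul g h : SUs g -> SUs h -> SUs (g *m h).
Proof.
case=> dg qg eg [dh qh eh]; split.
- by rewrite det_mulmx dg dh mulr1.
- by move=> x y; rewrite -!mulmxA qg qh.
- by rewrite -mulmxA eh eg.
Qed.

Lemma app_delta (x : 'cV[C]_d) : app ('e_i0 : 'rV[C]_d) x = x i0 0.
Proof. by rewrite /app -rowE mxE. Qed.

Lemma decomp s : SUs s -> exists f, f *m e = 0 /\ Dg (T (- f) *m s).
Proof.
move=> sS; have su := SU_unit sS; case: (sS) => ds qs es.
set c := (e i0 0)^-1.
pose P := 1%:M - c *: (e *m 'e_i0).
have Pe : P *m e = 0.
  rewrite /P mulmxBl mul1mx -scalemxAl -mulmxA mx_app app_delta mul_mx_scalar.
  by rewrite scalerA mulVf // scale1r subrr.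
have Px x : Hy x -> P *m x = x.
  move=> hx; rewrite /P mulmxBl mul1mx -scalemxAl -mulmxA mx_app app_delta hx.
  by rewrite mul_mx_scalar scale0r scaler0 subr0.
pose f : 'rV[C]_d := c *: ('e_i0 *m s *m P *m invmx s).
have ise : invmx s *m e = e by rewrite -{1}es mulKmx.
have fe : f *m e = 0.
  by rewrite /f -scalemxAl -!mulmxA ise Pe !mulmx0 scaler0.
exists f; split => //; split.
  apply: SU_mul => //; apply: T_SU; by rewrite mulNmx fe oppr0.
move=> x hx; rewrite /Hy -mulmxA Tx -app_delta appD appZ app_delta.
rewrite appN /f appZl !appM mulKmx // Px // app_delta.
by rewrite mulNr app_delta mulrAC mulVf // mul1r subrr.
Qed.


Definition pr (x : 'cV[C]_d) : 'cV[C]_d := x - (x i0 0 / e i0 0) *: e.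

Lemma Hy_pr x : Hy (pr x).
Proof. by rewrite /Hy /pr !mxE divfK // subrr. Qed.

Lemma app_e f : f *m e = 0 -> app f e = 0.
Proof. by move=> fe; rewrite /app fe mxE. Qed.

Lemma app_pr f x : f *m e = 0 -> app f (pr x) = app f x.
Proof. by move=> fe; rewrite /pr appD appNr appZ app_e // mulr0 subr0. Qed.

Lemma Q_prr x y : Q x (pr y) = Q x y.
Proof. by rewrite /pr QFDr -scaleNr QFZr QeR mulr0 addr0. Qed.

Lemma rho_pr x : rh (pr x) = rh x.
Proof. by rewrite /pr rhoD rhoN rhoZ rho_e scaler0 subr0. Qed.

Lemma QF_mx x y : Q x y = (x^T *m M *m cmx y) 0 0.
Proof.
rewrite QFE /app /rho -mulmxA.
have -> : x^T *m (M *m cmx y) = ((M *m cmx y)^T *m x)^T by rewrite trmx_mul trmxK.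
by rewrite [RHS]mxE.
Qed.

Lemma rho_surj f : f *m e = 0 -> exists x, Hy x /\ rh x = f.
Proof.
move=> fe.
have kM : (kermx M <= e^T)%MS.
  apply/row_subP => i; set y := row i (kermx M).
  have yM : y *m M = 0 by apply/sub_kermxP; exact: row_sub.
  have : exists c, y^T = c *: e.
    by apply/hker => w; rewrite QF_mx trmxK yM mul0mx mxE.
  case=> c hc; rewrite -[y]trmxK hc linearZ /=.
  by apply: scalemx_sub.
have rk1 : (\rank (kermx M) <= 1)%N.
  by apply: leq_trans (mxrankS kM) _; apply: rank_leq_row.
have Me : M^T *m e = 0.
  have := ker_rowM QeL; move/(congr1 trmx); rewrite trmx_mul trmxK => ->.
  by rewrite trmx0.
have sub1 : (M^T <= kermx e)%MS by apply/sub_kermxP.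
have rke : \rank (kermx e) = (d - 1)%N.
  by rewrite mxrank_ker -mxrank_tr rank_rV trmx_eq0 he0.
have rkM : (d - 1 <= \rank M^T)%N.
  by rewrite mxrank_tr; move: rk1; rewrite mxrank_ker; lia.
have sub2 : (kermx e <= M^T)%MS.
  have [_ <-] := mxrank_leqif_sup sub1.
  by rewrite eqn_leq (mxrankS sub1) rke rkM.
have : (f <= M^T)%MS by apply: submx_trans sub2; apply/sub_kermxP.
case/submxP => y hy.
exists (pr (map_mx Num.conj y)^T); split; first exact: Hy_pr.
rewrite rho_pr /rho trmx_mul hy; congr (_ *m _).
by apply/matrixP => i j; rewrite !mxE conjCK.
Qed.

Lemma kernel_solve (f g : 'rV[C]_d) : (4 <= d)%N ->
  exists2 x : 'cV[C]_d, x != 0 & [/\ Hy x, app f x = 0 & app g x = 0].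
Proof.
move=> hd.
pose A : 'M[C]_(1 + (1 + 1), d) := col_mx 'e_i0 (col_mx f g).
have rA : (\rank A^T <= 3)%N by rewrite mxrank_tr; apply: rank_leq_row.
have nz : kermx A^T != 0.
  apply/eqP => h; have := mxrank_ker A^T; rewrite h mxrank0; lia.
case/rowV0Pn: nz => v /sub_kermxP vA vn0.
exists v^T; first by rewrite trmx_eq0.
have : A *m v^T = 0 by rewrite -[A]trmxK -trmx_mul vA trmx0.
rewrite /A !mul_col_mx => /eqP; rewrite !col_mx_eq0 => /and3P[/eqP h1 /eqP h2 /eqP h3].
split.
- by rewrite /Hy -app_delta /app h1 mxE.
- by rewrite /app h2 mxE.
- by rewrite /app h3 mxE.
Qed.

Lemma polar a b : Q a a = 0 -> Q b b = 0 -> Q (a + b) (a + b) = 0 ->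
  Q (a + 'i *: b) (a + 'i *: b) = 0 -> Q a b = 0.
Proof.
move=> ha hb hab hiab.
move: hab hiab; rewrite !QFDl !QFDr !QFZl !QFZr !conjCi ha hb !addr0 !add0r => h1 h2.
have h3 : 'i * (Q b a - Q a b) = 0.
  by rewrite -h2; ring.
move: h3 => /eqP; rewrite mulf_eq0 (negbTE (neq0Ci _)) /= subr_eq0 => /eqP h3.
move: h1; rewrite h3 => /eqP; rewrite -mulr2n -mulr_natr mulf_eq0 pnatr_eq0 orbF.
by move/eqP.
Qed.


Lemma exists_nz f : f != 0 -> f *m e = 0 -> exists z, Hy z /\ app f z != 0.
Proof.
move=> fn fe.
have [j hj] : exists j, f 0 j != 0.
  apply: NNPP => H; apply: (negP fn); apply/eqP/rowP => j; rewrite mxE.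
  apply: NNPP => hj; apply: H; exists j; exact/eqP.
exists (pr (delta_mx j 0)); split; first exact: Hy_pr.
by rewrite app_pr // /app -colE !mxE.
Qed.

Lemma exists_aniso (hd : (4 <= d)%N) f : f != 0 -> f *m e = 0 ->
  exists v, [/\ Hy v, app f v = 0 & Q v v != 0].
Proof.
move=> fn fe; apply: NNPP => H.
have iso : forall v, Hy v -> app f v = 0 -> Q v v = 0.
  move=> v hv hf; apply/eqP; apply: NNPP => hq; apply: H; exists v; split => //.
  exact/negP.
have [z0 [hz0 fz0]] := exists_nz fn fe.
have [x xn0 [hx fx gx]] := kernel_solve f (rh z0) hd.
rewrite /Hy in hx hz0.
have Qx0 : forall y, Q x y = 0.
  move=> y; rewrite -Q_prr; have := Hy_pr y; move: (pr y) => y' hy'.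
  pose t := app f y' / app f z0.
  pose y'' := y' - t *: z0.
  have hy'' : y'' i0 0 = 0 by rewrite /y'' !mxE hy' hz0 mulr0 subr0.
  have fy'' : app f y'' = 0 by rewrite /y'' appD appNr appZ /t divfK // subrr.
  have -> : y' = y'' + t *: z0 by rewrite /y'' subrK.
  rewrite QFDr QFZr (QFE M x z0) gx mulr0 addr0.
  move: (y'') hy'' fy'' => w hw fw.
  apply: polar; apply: iso => //.
  - by rewrite /Hy mxE hx hw addr0.
  - by rewrite appD fx fw addr0.
  - by rewrite /Hy !mxE hx hw mulr0 addr0.
  - by rewrite appD appZ fx fw mulr0 addr0.
have [c hc] := (hker x).1 Qx0.
move: hx; rewrite hc mxE => /eqP; rewrite mulf_eq0 (negbTE he00) orbF => /eqP c0.
by move: xn0; rewrite hc c0 scale0r eqxx.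
Qed.

Definition refl (u : 'cV[C]_d) (l : C) : 'M[C]_d :=
  1%:M + ((l - 1) / Q u u) *: (u *m rh u).

Lemma refl_x u l x : refl u l *m x = x + ((l - 1) / Q u u * Q x u) *: u.
Proof.
by rewrite /refl mulmxDl mul1mx -scalemxAl -mulmxA mx_app mul_mx_scalar scalerA (QFE M x u).
Qed.

Lemma refl_f u l f : f *m refl u l = f + ((l - 1) / Q u u * app f u) *: rh u.
Proof.
by rewrite /refl mulmxDr mulmx1 -scalemxAr mulmxA mx_app mul_scalar_mx scalerA.
Qed.

Section Refl.
Variables (u : 'cV[C]_d) (l : C).
Hypothesis hl : l * l^* = 1.
Hypothesis qu : Q u u != 0.

Lemma l_neq0 : l != 0.
Proof. by apply/eqP => l0; move: hl; rewrite l0 mul0r => /eqP; rewrite eq_sym oner_eq0. Qed.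

Lemma lc : l^* = l^-1.
Proof. by apply: (mulfI l_neq0); rewrite hl divff // l_neq0. Qed.

Lemma refl_Q x y : Q (refl u l *m x) (refl u l *m y) = Q x y.
Proof.
rewrite !refl_x QFDl !QFDr !QFZl !QFZr (QF_herm Mherm y u) !rmorphM /= fmorphV /=.
rewrite QF_real // rmorphB /= rmorph1 lc.
set A := Q x u; set B := (Q y u)^*; set q := Q u u.
have ln := l_neq0.
field; by rewrite qu ln.
Qed.

Lemma refl_det : \det (refl u l) = l.
Proof.
rewrite /refl scalemxAr det_rank1 -scalemxAl mxE.
rewrite -/(app (rh u) u) -QFE; field; done.
Qed.

Lemma refl_e : refl u l *m e = e.
Proof. by rewrite refl_x QeL mulr0 scale0r addr0. Qed.

Lemma refl_Hy x : Hy u -> Hy x -> Hy (refl u l *m x).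
Proof. by rewrite /Hy refl_x !mxE => -> ->; rewrite mulr0 addr0. Qed.

End Refl.

Lemma pair_D u v l : Hy u -> Hy v -> Q u u != 0 -> Q v v != 0 -> l * l^* = 1 ->
  Dg (refl v l^* *m refl u l).
Proof.
move=> hu hv qu qv hl.
have hl' : l^* * l^*^* = 1 by rewrite conjCK mulrC.
split; first split.
- by rewrite det_mulmx !refl_det // mulrC.
- by move=> x y; rewrite -!mulmxA refl_Q // refl_Q.
- by rewrite -mulmxA refl_e // refl_e.
- by move=> x hx; rewrite -mulmxA; apply: refl_Hy => //; apply: refl_Hy.
Qed.


Lemma key (hd : (4 <= d)%N) (W : 'rV[C]_d -> Prop)
  (We : forall f, W f -> f *m e = 0) (W0 : W 0)
  (WD : forall f g, W f -> W g -> W (f + g))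
  (WN : forall f, W f -> W (- f))
  (WK : forall k f, Dg k -> W f -> W (f *m k))
  phi (Wphi : W phi) (phin : phi != 0) : forall f, f *m e = 0 -> W f.
Proof.
have phie := We _ Wphi.
have [v [hv fv qv]] := exists_aniso hd phin phie.
have line : forall u, Hy u -> Q u u != 0 -> app phi u != 0 -> forall z, W (z *: rh u).
  move=> u hu qu fu.
  pose g := app phi u / Q u u.
  have gn : g != 0 by rewrite mulf_neq0 // invr_neq0.
  suff S : forall z, W ((z * g) *: rh u).
    by move=> z; have := S (z / g); rewrite divfK.
  apply: gen.
  - by rewrite mul0r scale0r.
  - by move=> a b ha hb; rewrite mulrDl scalerDl; apply: WD.
  - by move=> a ha; rewrite mulNr scaleNr; apply: WN.
  - move=> l hl.
    have := WD _ _ (WK _ _ (pair_D hu hv qu qv hl) Wphi) (WN _ Wphi).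
    have E1 : phi *m refl v l^* = phi by rewrite refl_f fv mulr0 scale0r addr0.
    rewrite mulmxA E1 refl_f addrAC subrr add0r.
    by congr W; congr (_ *: _); rewrite /g; ring.
have [z0 [hz0 fz0]] := exists_nz phin phie.
have [n /andP[qn fn]] := @quad _ (Q z0 z0) (Q z0 v + Q v z0) (Q v v) (app phi z0) 0 qv (introT orP (or_introl fz0)).
pose z := z0 + n%:R *: v.
have hz : Hy z by rewrite /Hy /z !mxE hz0 hv mulr0 addr0.
have qz : Q z z != 0.
  suff -> : Q z z = Q z0 z0 + (Q z0 v + Q v z0) * n%:R + Q v v * n%:R ^+ 2 by [].
  by rewrite /z QFDl !QFDr !QFZl !QFZr conjC_nat; ring.
have fz : app phi z != 0 by rewrite /z appD appZ fv mulr0 addr0.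
clearbody z; move=> f fe.
have [x [hx rx]] := rho_surj fe.
have [m /andP[qm fm]] := @quad _ (Q x x) (Q x z + Q z x) (Q z z) (app phi x) (app phi z) qz
   (introT orP (or_intror fz)).
pose y := x + m%:R *: z.
have hy : Hy y by rewrite /Hy /y !mxE hx hz mulr0 addr0.
have qy : Q y y != 0.
  suff -> : Q y y = Q x x + (Q x z + Q z x) * m%:R + Q z z * m%:R ^+ 2 by [].
  by rewrite /y QFDl !QFDr !QFZl !QFZr conjC_nat; ring.
have fy : app phi y != 0 by rewrite /y appD appZ mulrC.
have -> : f = 1 *: rh y + - (m%:R *: rh z).
  by rewrite scale1r /y rhoD rhoZ conjC_nat rx addrK.
apply: WD; first exact: line.
by apply: WN; apply: line.
Qed.

End E.

Lemma Qmat_herm (R : realType) d (alpha : R) (i j : 'I_d) :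
  Qmat d alpha j i = (Qmat d alpha i j)^*.
Proof.
rewrite /Qmat !mxE; case: (boolP (i == j)) => [/eqP ->|hij]; first by rewrite eqxx conjC1.
rewrite eq_sym (negbTE hij).
case: (ltngtP i j) => h.
- exact: (esym (conjcK _)).
- by [].
- by exfalso; move/eqP: hij; apply; apply: val_inj.
Qed.

Ltac simpl_bools :=
  repeat match goal with
  | |- context [(?x == ?y)] =>
      first [ have -> : (x == y) = true by lia | have -> : (x == y) = false by lia ]
  | |- context [(?x < ?y)%N] =>
      first [ have -> : (x < y)%N = true by lia | have -> : (x < y)%N = false by lia ]
  end.

Lemma Qmat_diff (R : realType) d (alpha : R) (i j j' : 'I_d) : val j' = (val j).+1 ->
  Qmat d alpha i j' - Qmat d alpha i j =
  (i == j)%:R * ((1 + zeta alpha)^-1^* - 1) + (i == j')%:R * (1 - (1 + zeta alpha)^-1).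
Proof.
move=> hj; rewrite /Qmat !mxE.
have E1 : (i == j) = (val i == val j) by [].
have E2 : (i == j') = (val i == val j') by [].
have E3 : (j' < i)%N = (val j' < val i)%N by [].
have E4 : (j < i)%N = (val j < val i)%N by [].
rewrite E1 E2 E3 E4 hj; move: (val i) (val j) => a b.
set c := (1 + zeta alpha)^-1; clearbody c.
case: (ltngtP a b) => h; [| case: (ltngtP a b.+1) => h' |]; try lia; simpl_bools;
  rewrite /= ?mulr0n ?mulr1n ?mul0r ?mul1r ?add0r ?addr0 ?subrr //.
Qed.

Lemma c_neq1 (R : realType) (alpha : R) : (1 + zeta alpha)^-1 != 1.
Proof.
rewrite invr_eq1; apply/negP => /eqP h.
have z0 : zeta alpha = 0 by apply: (addrI 1); rewrite h addr0.
have : ((cos (2 * pi * alpha)) +i* (- sin (2 * pi * alpha)))%C = (0 +i* 0)%C := z0.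
case/ceq => hc /eqP; rewrite oppr_eq0 => /eqP hs.
by have := cos2Dsin2 (2 * pi * alpha); rewrite hc hs expr0n /= addr0 => /eqP; rewrite eq_sym oner_eq0.
Qed.

Lemma e0_neq0 (R : realType) d (alpha : R) (e : 'cV[R[i]]_d) (i0 : 'I_d) :
  val i0 = 0%N -> e != 0 -> e^T *m Qmat d alpha = 0 -> e i0 0 != 0.
Proof.
move=> h0 en eM; apply: contraNneq en => e0.
apply/eqP/matrixP => p k; rewrite (ord1 k) mxE.
suff H : forall n (hn : (n < d)%N), e (Ordinal hn) 0 = 0.
  by rewrite -(H p (ltn_ord p)); congr (e _ 0); apply: val_inj.
elim => [|n IH] hn.
  by rewrite -e0; congr (e _ 0); apply: val_inj; rewrite /= h0.
have hn' : (n < d)%N by lia.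
have := IH hn'; set j := Ordinal hn'; set j' := Ordinal hn => ej.
have col0 : forall l, \sum_i e i 0 * Qmat d alpha i l = 0.
  move=> l; transitivity ((e^T *m Qmat d alpha) 0 l); last by rewrite eM mxE.
  by rewrite [RHS]mxE; apply: eq_bigr => i1 _; rewrite [e^T 0 i1]mxE.
have : \sum_i e i 0 * (Qmat d alpha i j' - Qmat d alpha i j) = 0.
  by under eq_bigr do rewrite mulrBr; rewrite sumrB !col0 subrr.
under eq_bigr => i _ do rewrite (Qmat_diff alpha i (j:=j) (j':=j')) // mulrDr.
rewrite big_split /=.
set A := (1 + zeta alpha)^-1^* - 1; set B := 1 - (1 + zeta alpha)^-1.
have S1 : forall (l : 'I_d) (X : R[i]), \sum_i e i 0 * ((i == l)%:R * X) = e l 0 * X.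
  move=> l X; rewrite (bigD1 l) //= big1 ?addr0; first by rewrite eqxx mul1r.
  by move=> i /negbTE ->; rewrite mul0r mulr0.
rewrite !S1 ej mul0r add0r => /eqP; rewrite mulf_eq0 => /orP[/eqP //|].
by rewrite /B subr_eq0 eq_sym (negbTE (c_neq1 alpha)).
Qed.

Unset Implicit Arguments.
Local Open Scope classical_set_scope.

Theorem mainTheorem7 (R : realType) (d : nat) (alpha : R)
  (hd : (4 <= d)%N) (ha0 : 0 < alpha) (ha1 : alpha < 1 / 2)
  (hint : exists k : int, (d.+1)%:R * alpha = k%:~R)
  (e : 'cV[R[i]]_d) (he0 : e != 0)
  (hker : forall x : 'cV[R[i]]_d,
      (forall y, Qform alpha x y = 0) <-> exists c : R[i], x = c *: e)
  (G : set 'M[R[i]]_d)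
  (hG1 : G 1%:M)
  (hGM : forall g h, G g -> G h -> G (g *m h))
  (hGV : forall g, G g -> G (invmx g))
  (hGsub : G `<=` SUstar alpha e)
  (hDG : Dgrp alpha e `<=` G) :
  G = Dgrp alpha e \/ G = SUstar alpha e.
Proof.
pose M := Qmat d alpha.
have Mh : forall i j, M j i = (M i j)^* := Qmat_herm alpha.
have hk : forall x : 'cV[R[i]]_d,
    (forall y, QF M x y = 0) <-> exists c : R[i], x = c *: e := hker.
have d0 : (0 < d)%N by lia.
pose i0 : 'I_d := Ordinal d0.
have he00 : e i0 0 != 0.
  by apply: (e0_neq0 (alpha:=alpha)) => //; apply: ker_rowM; apply: QeL hk.
have SUE : forall g, SUstar alpha e g <-> SUs M e g by [].
have HypE : forall x : 'cV[R[i]]_d, Hyp x <-> Hy i0 x.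
  move=> x; split; first by move/(_ i0 erefl).
  by move=> hx i hi; rewrite (_ : i = i0) //; apply: val_inj.
have DE : forall g, Dgrp alpha e g <-> Dg M e i0 g.
  move=> g; split; case=> h1 h2; split => // x hx.
  - by apply/HypE; apply: h2; apply/HypE.
  - by apply/HypE; apply: h2; apply/HypE.
have Gdec : forall s, SUs M e s -> exists f, [/\ f *m e = 0, Dg M e i0 (T e (- f) *m s), G (T e (- f) *m s) & s = T e f *m (T e (- f) *m s)].
  move=> s Ss; have [f [fe Dk]] := decomp Mh hk he00 Ss.
  exists f; split => //; first by apply: (hDG); apply/DE.
  by rewrite mulmxA T_mul // subrr T0 mul1mx.
case: (classic (G `<=` Dgrp alpha e)) => [GD | nGD].
  by left; apply/seteqP; split.
right.
have [g [Gg nDg]] : exists g, G g /\ ~ Dgrp alpha e g.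
  apply: NNPP => H; apply: nGD => g Gg; apply: NNPP => nD; apply: H; by exists g.
have [f [fe Dk Gk gE]] := Gdec g (hGsub _ Gg).
set k := T e (- f) *m g in Dk Gk gE.
have ku : k \in unitmx by apply: (SU_unit (M:=M)); apply: hGsub.
have GTf : G (T e f).
  have -> : T e f = g *m invmx k by rewrite {1}gE mulmxK.
  by apply: (hGM) => //; apply: (hGV).
have fn0 : f != 0.
  apply/eqP => f0; apply: nDg; apply/DE; move: Dk.
  by rewrite /k f0 oppr0 T0 mul1mx.
pose W := fun h : 'rV[R[i]]_d => h *m e = 0 /\ G (T e h).
have We : forall h, W h -> h *m e = 0 by move=> h [].
have W0 : W 0 by split; [rewrite mul0mx | rewrite T0].
have WD : forall a b, W a -> W b -> W (a + b).
  move=> a b [ae Ga] [be Gb]; split; first by rewrite mulmxDl ae be addr0.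
  by rewrite -T_mul //; apply: (hGM).
have WN : forall a, W a -> W (- a).
  move=> a [ae Ga]; split; first by rewrite mulNmx ae oppr0.
  by rewrite -(T_inv Mh hk ae); apply: (hGV).
have WK : forall k0 a, Dg M e i0 k0 -> W a -> W (a *m k0).
  move=> k0 a Dk0 [ae Ga]; have Gk0 : G k0 by apply: (hDG); apply/DE.
  case: (Dk0) => [[dk qk ek] _].
  have k0u : k0 \in unitmx by rewrite unitmxE dk unitr1.
  split; first by rewrite -mulmxA ek.
  by rewrite -(conj_T a k0u ek); apply: (hGM) => //; apply: (hGM) => //; apply: (hGV).
have Wf : W f by [].
have WT : forall h, h *m e = 0 -> W h.
  move=> h he; exact: (@key _ _ M Mh e he0 hk i0 he00 hd W We W0 WD WN WK f Wf fn0 h he).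
apply/seteqP; split => // s Ss.
have [f' [fe' _ Gk' ->]] := Gdec s Ss.
by apply: (hGM) => //; case: (WT f' fe').
Qed.
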